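(* Let $d,K,L,M,N\in\mathbb N$ and let $w_{k,l,m},x_{k,l,n}\in\mathbb R^d$ for $k\in[K],l\in[L],m\in[M],n\in[N]$. Suppose that for all $k\in[K]$, $$\sum_{j=1}^k\Big(\sum_{(l,m,n)\in[L]\times[M]\times[N]}|w_{k,l,m}^Tx_{j,l,n}|\Big)^2\le\beta,\qquad\sum_{l=1}^L\sum_{m=1}^M\|w_{k,l,m}\|_1\le G_w,\qquad\sum_{l=1}^L\sum_{n=1}^N\|x_{k,l,n}\|_1\le G_x,$$ with $G_w,G_x>0$. Then for any $\lambda>0$, $$\sum_{k=1}^K\sum_{(l,m,n)\in[L]\times[M]\times[N]}|w_{k,l,m}^Tx_{k,l,n}|\le\sqrt{(\lambda+\beta)\,dLMK\log\Big(1+\frac{MG_w^2G_x^2K}{dL\lambda}\Big)}.$$ *)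

(* Defs.v *)
From HB Require Import structures.
From mathcomp Require Import all_boot all_order all_algebra.
From mathcomp Require Import all_classical all_reals all_analysis.
Set Implicit Arguments. Unset Strict Implicit. Unset Printing Implicit Defensive.
Import Order.TTheory GRing.Theory Num.Theory.
Local Open Scope ring_scope.

Definition dotv (R : realType) (d : nat) (u v : 'rV[R]_d) : R :=
  \sum_(i < d) u 0 i * v 0 i.

Definition norm1 (R : realType) (d : nat) (u : 'rV[R]_d) : R :=
  \sum_(i < d) `|u 0 i|.

(* Main.v *)
Require Import Defs.
From HB Require Import structures.
From mathcomp Require Import all_boot all_order all_algebra.
From mathcomp Require Import all_classical all_reals all_analysis.
From mathcomp Require Import ring lra.
Import Order.TTheory GRing.Theory Num.Theory.
Set Implicit Arguments. Unset Strict Implicit.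
Local Open Scope ring_scope.

Lemma sylvester1 (R : realType) n (u : 'M[R]_(n,1)) (v : 'M[R]_(1,n)) :
  \det (1%:M + u *m v) = 1 + (v *m u) 0 0.
Proof.
have E1 : block_mx (1%:M : 'M[R]_1) (-v) u 1%:M =
   block_mx 1%:M 0 u 1%:M *m block_mx 1%:M (-v) 0 (1%:M + u *m v).
  rewrite mulmx_block ?mul1mx ?mul0mx ?mulmx1 ?mulmx0 ?addr0 ?add0r.
  by rewrite mulmxN (addrC 1%:M) addKr.
have E2 : block_mx (1%:M : 'M[R]_1) (-v) u 1%:M =
   block_mx (1%:M + v *m u) (-v) 0 1%:M *m block_mx 1%:M 0 u 1%:M.
  rewrite mulmx_block ?mul1mx ?mul0mx ?mulmx1 ?mulmx0 ?addr0 ?add0r.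
  by rewrite mulNmx addrK.
have := congr1 determinant E1; rewrite E2 !det_mulmx.
rewrite ?det_ublock ?det_lblock ?det1 ?mul1r ?mulr1.
by rewrite det_mx11 !mxE eqxx => <-.
Qed.

Lemma mdl (R : realType) n (A : 'M[R]_n) (u : 'M[R]_(n,1)) (v : 'M[R]_(1,n)) :
  A \in unitmx -> \det (A + u *m v) = \det A * (1 + (v *m invmx A *m u) 0 0).
Proof.
move=> uA.
have -> : A + u *m v = A *m (1%:M + (invmx A *m u) *m v).
  by rewrite mulmxDr mulmx1 !mulmxA mulmxV // mul1mx.
by rewrite det_mulmx sylvester1 mulmxA.
Qed.

Definition PD (R : realType) n (A : 'M[R]_n) :=
  A^T = A /\ forall u : 'rV_n, u != 0 -> 0 < (u *m A *m u^T) 0 0.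

Lemma PD_diag (R : realType) n (A : 'M[R]_n) i : PD A -> 0 < A i i.
Proof.
case=> _ hA; have := hA (delta_mx 0 i).
rewrite -rowE trmx_delta -colE !mxE; apply.
apply/eqP=> /matrixP /(_ 0 i); rewrite !mxE !eqxx /=.
by move/eqP; rewrite oner_eq0.
Qed.

Lemma PD_tr (R : realType) n (A : 'M[R]_n) : (0 < n)%N -> PD A -> 0 < \tr A.
Proof.
case: n A => // n A _ hA; rewrite /mxtrace (bigD1 ord0) //=.
rewrite ltr_pwDl ?PD_diag // sumr_ge0 // => i _.
exact/ltW/PD_diag.
Qed.

Lemma ln_le_sub1 (R : realType) (x : R) : 0 < x -> ln x <= x - 1.
Proof. by move=> x0; have := @le_ln1Dx R (x - 1); rewrite addrCA subrr addr0; apply; lra. Qed.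

Lemma ln_conc (R : realType) (a t : R) (n : nat) : 0 < a -> 0 < t -> (0 < n)%N ->
  ln a + n%:R * ln (t / n%:R) <= (n.+1)%:R * ln ((a + t) / (n.+1)%:R).
Proof.
move=> a0 t0 n0.
have nR : 0 < n%:R :> R by rewrite ltr0n.
set m := (a + t) / (n.+1)%:R.
have m0 : 0 < m by rewrite divr_gt0 // ?ltr0n // addr_gt0.
have h1 := ln_le_sub1 (divr_gt0 a0 m0).
have h2 := ln_le_sub1 (divr_gt0 (divr_gt0 t0 nR) m0).
rewrite ln_div ?posrE // in h1; rewrite ln_div ?posrE ?divr_gt0 // in h2.
have e : a / m + n%:R * (t / n%:R / m - 1) - 1 = 0.
  rewrite /m; field; apply/and3P; split; apply/lt0r_neq0; rewrite ?addr_gt0 ?ltr0n ?ltr01 //.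
rewrite -[(n.+1)%:R]natr1.
have h3 : n%:R * (ln (t / n%:R) - ln m) <= n%:R * (t / n%:R / m - 1).
  by rewrite ler_pM2l.
  lra.
by rewrite addr_gt0.
Qed.

Lemma quad_block (R : realType) n (a : 'M[R]_1) b c (C : 'M[R]_n) (u1 : 'rV_1) (u2 : 'rV_n) :
  row_mx u1 u2 *m block_mx a b c C *m (row_mx u1 u2)^T =
  u1 *m a *m u1^T + u1 *m b *m u2^T + (u2 *m c *m u1^T + u2 *m C *m u2^T).
Proof.
rewrite mul_row_block tr_row_mx mul_row_col !mulmxDl.
rewrite -!addrA; congr (_ + _); rewrite addrCA; congr (_ + _).
Qed.

Lemma row_mx_neq0 (R : realType) m n1 n2 (u1 : 'M[R]_(m, n1)) (u2 : 'M[R]_(m, n2)) :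
  u2 != 0 -> row_mx u1 u2 != 0.
Proof.
move=> h; apply/eqP; rewrite -row_mx0 => /eq_row_mx [_ e].
by rewrite e eqxx in h.
Qed.

Lemma row_mx_neq0l (R : realType) m n1 n2 (u1 : 'M[R]_(m, n1)) (u2 : 'M[R]_(m, n2)) :
  u1 != 0 -> row_mx u1 u2 != 0.
Proof.
move=> h; apply/eqP; rewrite -row_mx0 => /eq_row_mx [e _].
by rewrite e eqxx in h.
Qed.

Lemma PD_step (R : realType) n (A : 'M[R]_(1 + n)) :
  (forall B : 'M[R]_n, PD B -> 0 < \det B /\ ln (\det B) <= n%:R * ln (\tr B / n%:R)) ->
  PD A -> 0 < \det A /\ ln (\det A) <= (n.+1)%:R * ln (\tr A / (n.+1)%:R).
Proof.
move=> IH [sA pA].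
set a := ulsubmx A; set b := ursubmx A; set c := dlsubmx A; set C := drsubmx A.
have hA : A = block_mx a b c C by rewrite submxK.
have [cb CC] : c = b^T /\ C^T = C.
  move: sA; rewrite hA tr_block_mx => /eq_block_mx [_ e1 _ e2].
  by split; [rewrite -e1 trmxK | exact: e2].
set a0 := a 0 0.
have ha : a = a0%:M by apply: mx11_scalar.
have a0pos : 0 < a0.
  have := pA (row_mx 1%:M 0) (row_mx_neq0l _ (oner_neq0 _)).
  rewrite hA quad_block !mul0mx !add0r trmx0 mulmx0 addr0 trmx1 mulmx1 mul1mx.
  by rewrite addr0.
have a0n : a0 != 0 by rewrite lt0r_neq0.
set S := C - c *m (a0^-1 *: b).
have detA : \det A = a0 * \det S.
  have -> : A = block_mx 1%:M 0 (a0^-1 *: c) 1%:M *m block_mx a b 0 S.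
    rewrite hA mulmx_block ?mul1mx ?mul0mx ?mulmx1 ?mulmx0 ?addr0 ?add0r.
    rewrite ha mul_mx_scalar scalerA mulfV // scale1r.
    by rewrite /S -scalemxAl scalemxAr addrC subrK.
  rewrite det_mulmx ?det_lblock ?det_ublock ?det1 ?mul1r ?det_mx11. reflexivity.
have PS : PD S.
  split.
    rewrite /S linearB /= trmx_mul linearZ /= -cb CC.
    by rewrite cb trmxK -scalemxAl scalemxAr.
  move=> u2 u20.
  have := pA (row_mx (- (a0^-1) *: (u2 *m c)) u2) (row_mx_neq0 _ u20).
  rewrite hA quad_block.
  have -> : (- a0^-1 *: (u2 *m c)) *m a = - (u2 *m c).
    by rewrite ha mul_mx_scalar scalerA mulrN mulfV // scaleN1r.
  rewrite mulNmx [- _ + _]addrC -addrA addKr.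
  suff -> : u2 *m S *m u2^T = - a0^-1 *: (u2 *m c) *m b *m u2^T + u2 *m C *m u2^T by [].
  rewrite /S mulmxBr mulmxBl addrC; congr (_ + _).
  by rewrite -!scalemxAl -!scalemxAr !mulmxA scaleNr -scalemxAl.
have [dS lS] := IH S PS.
split; first by rewrite detA mulr_gt0.
have trA : \tr A = a0 + \tr C by rewrite hA mxtrace_block /mxtrace big_ord1.
have trS : \tr S <= \tr C.
  rewrite /S linearB /= -scalemxAr mxtraceZ mxtrace_mulC /mxtrace big_ord1.
  rewrite gerBl mulr_ge0 // ?invr_ge0 ?(ltW a0pos) // cb !mxE sumr_ge0 // => i _.
  by rewrite !mxE -expr2 sqr_ge0.
rewrite detA lnM ?posrE // trA.
case: (posnP n) => [n0|n0].
  have nR : n%:R = 0 :> R by rewrite n0.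
  rewrite nR mul0r in lS.
  have -> : \tr C = 0.
    by rewrite /mxtrace big1 // => i _; have := ltn_ord i; rewrite {2}n0.
  have -> : (n.+1)%:R = 1 :> R by rewrite n0.
  by rewrite addr0 divr1 mul1r gerDl.
have tS := PD_tr n0 PS.
have tC : 0 < \tr C by apply: lt_le_trans trS.
apply: le_trans (ln_conc a0pos tC n0).
rewrite lerD2l; apply: (le_trans lS).
rewrite ler_pM2l ?ltr0n // ler_ln ?posrE ?divr_gt0 ?ltr0n //.
by rewrite ler_pM2r // invr_gt0 ltr0n.
Qed.

Lemma PD_det (R : realType) n (A : 'M[R]_n) :
  PD A -> 0 < \det A /\ ln (\det A) <= n%:R * ln (\tr A / n%:R).
Proof.
elim: n A => [|n IH] A hA.
  by rewrite det_mx00 ln1 mul0r ltr01 lexx.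
exact: (PD_step IH hA).
Qed.

Lemma PD_unit (R : realType) n (A : 'M[R]_n) : PD A -> A \in unitmx.
Proof.
by move=> /PD_det [h _]; rewrite unitmxE unitfE lt0r_neq0.
Qed.

Lemma bilin_sym (R : realType) n (A : 'M[R]_n) (u v : 'rV[R]_n) :
  A^T = A -> (v *m A *m u^T) 0 0 = (u *m A *m v^T) 0 0.
Proof.
move=> sA; transitivity ((v *m A *m u^T)^T 0 0); first by rewrite [RHS]mxE.
by rewrite !trmx_mul trmxK sA mulmxA.
Qed.

Lemma entB (R : realType) (M N : 'M[R]_1) : (M - N) 0 0 = M 0 0 - N 0 0.
Proof. by rewrite !mxE. Qed.
Lemma entD (R : realType) (M N : 'M[R]_1) : (M + N) 0 0 = M 0 0 + N 0 0.
Proof. by rewrite !mxE. Qed.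
Lemma entN (R : realType) (M : 'M[R]_1) : (- M) 0 0 = - M 0 0.
Proof. by rewrite !mxE. Qed.
Lemma entZ (R : realType) t (M : 'M[R]_1) : (t *: M) 0 0 = t * M 0 0.
Proof. by rewrite !mxE. Qed.

Lemma bilin_exp (R : realType) n (A : 'M[R]_n) (u v : 'rV[R]_n) (t : R) :
  A^T = A ->
  ((u - t *: v) *m A *m (u - t *: v)^T) 0 0 =
  (u *m A *m u^T) 0 0 - 2 * t * (u *m A *m v^T) 0 0 + t ^+ 2 * (v *m A *m v^T) 0 0.
Proof.
move=> sA; have -> : (u - t *: v)^T = u^T - t *: v^T.
  by rewrite [LHS]raddfB /= [(t *: v)^T]linearZ.
rewrite !mulmxBl !mulmxBr -!scalemxAl -!scalemxAr.
rewrite !entB !entZ (bilin_sym u v sA); ring.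
Qed.

Lemma PD_cs (R : realType) n (A : 'M[R]_n) (u v : 'rV[R]_n) :
  PD A -> ((u *m A *m v^T) 0 0) ^+ 2 <= (u *m A *m u^T) 0 0 * (v *m A *m v^T) 0 0.
Proof.
move=> [sA pA].
have ge0 : forall z : 'rV[R]_n, 0 <= (z *m A *m z^T) 0 0.
  move=> z; have [->|z0] := eqVneq z 0; last exact/ltW/pA.
  by rewrite mul0mx mul0mx mxE.
have [->|v0] := eqVneq v 0.
  have z : (0 : 'M[R]_1) 0 0 = 0 by rewrite mxE.
  by rewrite trmx0 mulmx0 z expr0n /= mul0mx mul0mx z mulr0.
have p0 := pA v v0.
set p := (v *m A *m v^T) 0 0 in p0 *.
set q := (u *m A *m v^T) 0 0.
have := ge0 (u - (q / p) *: v); rewrite bilin_exp // -/p -/q.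
move=> h.
have : 0 <= ((u *m A *m u^T) 0 0 - q ^+ 2 / p) * p.
  apply: mulr_ge0; last exact: ltW.
  suff -> : (u *m A *m u^T) 0 0 - q ^+ 2 / p =
     (u *m A *m u^T) 0 0 - 2 * (q / p) * q + (q / p) ^+ 2 * p by [].
  by field; rewrite lt0r_neq0.
by rewrite mulrBl divfK ?lt0r_neq0 // subr_ge0.
Qed.

Lemma PD_cs_inv (R : realType) n (A : 'M[R]_n) (w y : 'rV[R]_n) : PD A ->
  ((w *m y^T) 0 0) ^+ 2 <= (w *m A *m w^T) 0 0 * (y *m invmx A *m y^T) 0 0.
Proof.
move=> hA; have uA := PD_unit hA; have [sA _] := hA.
set z := y *m invmx A.
have e1 : w *m y^T = w *m A *m z^T.
  rewrite /z trmx_mul trmx_inv sA !mulmxA -(mulmxA w A) mulmxV //.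
  by rewrite mulmx1.
have e2 : z *m A *m z^T = y *m invmx A *m y^T.
  rewrite /z -(mulmxA y (invmx A) A) mulVmx // mulmx1 trmx_mul trmx_inv sA.
  by rewrite mulmxA.
rewrite e1 -e2; exact: PD_cs.
Qed.

Lemma mul11 (R : realType) n (M : 'M[R]_(1, n)) (N : 'M[R]_(n, 1)) :
  (M *m N) 0 0 = \sum_i M 0 i * N i 0.
Proof. by rewrite mxE. Qed.

Lemma mul11b (R : realType) (M N : 'M[R]_1) : (M *m N) 0 0 = M 0 0 * N 0 0.
Proof. by rewrite mxE big_ord1. Qed.

Lemma ent_tr (R : realType) (M : 'M[R]_1) : M^T 0 0 = M 0 0.
Proof. by rewrite mxE. Qed.

Lemma sq_pos (R : realType) n (u : 'rV[R]_n) : u != 0 -> 0 < \sum_i (u 0 i) ^+ 2.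
Proof.
move=> u0; rewrite lt_neqAle sumr_ge0 ?andbT; last by move=> i _; rewrite sqr_ge0.
apply/eqP=> /esym /psumr_eq0P h; move/eqP: u0; apply; apply/matrixP=> i j.
rewrite (ord1 i) mxE; apply/eqP; rewrite -sqrf_eq0; apply/eqP; apply: h => // k _.
by rewrite sqr_ge0.
Qed.

Lemma uuT (R : realType) n (u : 'rV[R]_n) : (u *m u^T) 0 0 = \sum_i (u 0 i) ^+ 2.
Proof. by rewrite mxE; apply: eq_bigr => i _; rewrite mxE expr2. Qed.

Lemma PD_addr (R : realType) n (V : 'M[R]_n) (y : 'rV[R]_n) :
  PD V -> PD (V + y^T *m y).
Proof.
move=> [sV pV]; split.
  by rewrite [LHS]raddfD /= sV trmx_mul trmxK.
move=> u u0; rewrite mulmxDr mulmxDl entD.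
apply: (lt_le_trans (pV u u0)); rewrite lerDl.
rewrite !mulmxA -mulmxA mul11b.
have -> : y *m u^T = (u *m y^T)^T by rewrite trmx_mul trmxK.
by rewrite ent_tr -expr2 sqr_ge0.
Qed.

Lemma pot_step (R : realType) n (V : 'M[R]_n) (y : 'rV[R]_n) : PD V ->
  (y *m invmx (V + y^T *m y) *m y^T) 0 0 <=
  ln (\det (V + y^T *m y)) - ln (\det V).
Proof.
move=> hV; set A := V + y^T *m y.
have hA : PD A by exact: PD_addr.
have [dA _] := PD_det hA; have [dV _] := PD_det hV.
have e : \det V = \det A * (1 - (y *m invmx A *m y^T) 0 0).
  have -> : V = A + (- y^T) *m y by rewrite /A mulNmx addrK.
  by rewrite mdl ?PD_unit // mulmxN entN.
set q := (y *m invmx A *m y^T) 0 0 in e *.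
have h := ln_le_sub1 (divr_gt0 dV dA).
rewrite ln_div ?posrE // in h.
have e' : \det V / \det A = 1 - q by rewrite e mulrAC mulfV ?lt0r_neq0 // mul1r.
rewrite e' in h; lra.
Qed.

Definition Vm (R : realType) n (lam : R) (y : nat -> 'rV[R]_n) (t : nat) : 'M[R]_n :=
  lam%:M + \sum_(j < t) (y j)^T *m y j.

Lemma VmS (R : realType) n (lam : R) (y : nat -> 'rV[R]_n) t :
  Vm lam y t.+1 = Vm lam y t + (y t)^T *m y t.
Proof. by rewrite /Vm big_ord_recr addrA. Qed.

Lemma Vm0 (R : realType) n (lam : R) (y : nat -> 'rV[R]_n) : Vm lam y 0 = lam%:M.
Proof. by rewrite /Vm big_ord0 addr0. Qed.

Lemma Vm_PD (R : realType) n (lam : R) (y : nat -> 'rV[R]_n) t :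
  0 < lam -> PD (Vm lam y t).
Proof.
move=> l0; elim: t => [|t IH]; last by rewrite VmS; exact: PD_addr.
rewrite Vm0; split; first exact: tr_scalar_mx.
move=> u u0; rewrite mul_mx_scalar -scalemxAl entZ uuT.
by rewrite mulr_gt0 // sq_pos.
Qed.

Lemma Vm_tr (R : realType) n (lam : R) (y : nat -> 'rV[R]_n) t :
  \tr (Vm lam y t) = lam * n%:R + \sum_(j < t) \sum_i (y j 0 i) ^+ 2.
Proof.
rewrite /Vm mxtraceD mxtrace_scalar mulr_natr raddf_sum /=; congr (_ + _).
apply: eq_bigr => j _; rewrite mxtrace_mulC /mxtrace big_ord1.
by rewrite uuT.
Qed.

Lemma pot_sum (R : realType) n (lam : R) (y : nat -> 'rV[R]_n) t : 0 < lam ->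
  \sum_(k < t) (y k *m invmx (Vm lam y k.+1) *m (y k)^T) 0 0 <=
  ln (\det (Vm lam y t)) - ln (\det (Vm lam y 0)).
Proof.
move=> l0; elim: t => [|t IH]; first by rewrite big_ord0 subrr.
rewrite big_ord_recr /=.
have := pot_step (y t) (Vm_PD y t l0); rewrite -VmS.
move: IH; set a := \sum_(_ < _) _; lra.
Qed.

Lemma pot_bound (R : realType) n (lam : R) (y : nat -> 'rV[R]_n) t :
  0 < lam -> (0 < n)%N ->
  \sum_(k < t) (y k *m invmx (Vm lam y k.+1) *m (y k)^T) 0 0 <=
  n%:R * ln (1 + (\sum_(j < t) \sum_i (y j 0 i) ^+ 2) / (n%:R * lam)).
Proof.
move=> l0 n0; apply: (le_trans (pot_sum y t l0)).
have [_ hd] := PD_det (Vm_PD y t l0).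
rewrite Vm0 det_scalar lnXn // Vm_tr in hd *.
set T := \sum_(_ < _) _ in hd *.
have T0 : 0 <= T by rewrite sumr_ge0 // => j _; rewrite sumr_ge0 // => i _; exact: sqr_ge0.
have nR : 0 < n%:R :> R by rewrite ltr0n.
have -> : 1 + T / (n%:R * lam) = (lam * n%:R + T) / n%:R / lam.
  by field; rewrite !lt0r_neq0.
have tp : 0 < lam * n%:R + T.
  by apply: (lt_le_trans (mulr_gt0 l0 nR)); rewrite lerDl.
rewrite ln_div ?posrE ?divr_gt0 //.
rewrite mulrBr mulr_natl; lra.
Qed.

Lemma le_sqrt_sq (R : realType) (x y : R) : 0 <= x -> x ^+ 2 <= y -> x <= Num.sqrt y.
Proof.
move=> x0 h; rewrite -(ger0_norm x0) -sqrtr_sqr; exact: ler_wsqrtr.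
Qed.

Lemma cs2 (R : realType) (a b c e : R) : 0 <= a -> 0 <= b -> 0 <= c -> 0 <= e ->
  Num.sqrt a * Num.sqrt b + Num.sqrt c * Num.sqrt e <=
  Num.sqrt (a + c) * Num.sqrt (b + e).
Proof.
move=> a0 b0 c0 e0; rewrite -(@sqrtrM _ (a + c)) ?addr_ge0 //.
apply: le_sqrt_sq; first by rewrite addr_ge0 // mulr_ge0 // sqrtr_ge0.
have := sqr_sqrtr a0; have := sqr_sqrtr b0; have := sqr_sqrtr c0; have := sqr_sqrtr e0.
set p := Num.sqrt a; set q := Num.sqrt b; set r := Num.sqrt c; set s := Num.sqrt e.
move=> <- <- <- <-.
have : 0 <= (p * s - r * q) ^+ 2 by exact: sqr_ge0.
move=> h; nra.
Qed.

Lemma sum_cs (R : realType) (I : finType) (f a b : I -> R) :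
  (forall i, f i <= Num.sqrt (a i) * Num.sqrt (b i)) ->
  (forall i, 0 <= a i) -> (forall i, 0 <= b i) ->
  \sum_i f i <= Num.sqrt (\sum_i a i) * Num.sqrt (\sum_i b i).
Proof.
move=> hf ha hb.
pose K (s A B : R) := [/\ s <= Num.sqrt A * Num.sqrt B, 0 <= A & 0 <= B].
suff : K (\sum_i f i) (\sum_i a i) (\sum_i b i) by case.
apply: (big_rec3 K); first by rewrite /K sqrtr0 mulr0 lexx.
move=> i s A B _ [h1 h2 h3]; split; rewrite ?addr_ge0 //.
apply: le_trans (cs2 _ _ h2 h3) => //; exact: lerD.
Qed.

Lemma sumsq_le (R : realType) (I : finType) (f : I -> R) :
  (forall i, 0 <= f i) -> \sum_i f i ^+ 2 <= (\sum_i f i) ^+ 2.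
Proof.
move=> hf.
pose K (A B : R) := A <= B ^+ 2 /\ 0 <= B.
suff : K (\sum_i f i ^+ 2) (\sum_i f i) by case.
apply: (big_rec2 K); first by rewrite /K expr0n /= lexx.
move=> i A B _ [h1 h2]; split; last by rewrite addr_ge0.
have := hf i => h; nra.
Qed.

Lemma jensen_ln (R : realType) L (t : 'I_L -> R) : (0 < L)%N -> (forall l, 0 <= t l) ->
  \sum_l ln (1 + t l) <= L%:R * ln (1 + (\sum_l t l) / L%:R).
Proof.
move=> L0 ht.
have LR : 0 < L%:R :> R by rewrite ltr0n.
set S := \sum_l t l.
have S0 : 0 <= S by rewrite sumr_ge0.
set m := 1 + S / L%:R.
have m0 : 0 < m by rewrite /m ltr_pwDl // divr_ge0 // ltW.
have h : \sum_l (ln (1 + t l) - ln m) <= \sum_l ((1 + t l) / m - 1).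
  apply: ler_sum => l _; rewrite -ln_div ?posrE //; last by rewrite ltr_pwDl.
  by apply: ln_le_sub1; rewrite divr_gt0 // ltr_pwDl.
move: h; rewrite !sumrB -mulr_suml big_split /= !sumr_const card_ord -/S.
have e : (L%:R + S) / m = L%:R.
  rewrite /m; field; rewrite ?lt0r_neq0 //.
  by apply: (lt_le_trans LR); rewrite lerDl.
rewrite e -mulr_natl; lra.
Qed.

Lemma quad_rank1 (R : realType) n (u y : 'rV[R]_n) :
  (u *m (y^T *m y) *m u^T) 0 0 = ((u *m y^T) 0 0) ^+ 2.
Proof.
rewrite !mulmxA -mulmxA mul11b.
have -> : y *m u^T = (u *m y^T)^T by rewrite trmx_mul trmxK.
by rewrite ent_tr -expr2.
Qed.

Lemma Vm_quad (R : realType) n (lam : R) (y : nat -> 'rV[R]_n) t (u : 'rV[R]_n) :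
  (u *m Vm lam y t *m u^T) 0 0 =
  lam * \sum_i (u 0 i) ^+ 2 + \sum_(j < t) ((u *m (y j)^T) 0 0) ^+ 2.
Proof.
elim: t => [|t IH].
  by rewrite Vm0 mul_mx_scalar -scalemxAl entZ uuT big_ord0 addr0.
by rewrite VmS mulmxDr mulmxDl entD IH quad_rank1 big_ord_recr /= addrA.
Qed.

Lemma dotvE (R : realType) n (u v : 'rV[R]_n) : dotv u v = (u *m v^T) 0 0.
Proof. by rewrite mxE; apply: eq_bigr => i _; rewrite mxE. Qed.

Lemma dot_comb (R : realType) n N (w : 'rV[R]_n) (c : 'I_N -> R) (xs : 'I_N -> 'rV[R]_n) :
  (w *m (\sum_k c k *: xs k)^T) 0 0 = \sum_k c k * dotv w (xs k).
Proof.
rewrite raddf_sum /= mulmx_sumr summxE; apply: eq_bigr => k _.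
by rewrite linearZ /= -scalemxAr entZ dotvE.
Qed.

Lemma norm1_ge0 (R : realType) n (u : 'rV[R]_n) : 0 <= norm1 u.
Proof. by rewrite /norm1 sumr_ge0. Qed.

Lemma sq_le_norm1 (R : realType) n (u : 'rV[R]_n) : \sum_i (u 0 i) ^+ 2 <= (norm1 u) ^+ 2.
Proof.
rewrite /norm1; apply: le_trans (sumsq_le _) => //.
by apply: ler_sum => i _; rewrite real_normK ?num_real.
Qed.

Lemma norm_sg_le1 (R : realType) (a : R) : `|Num.sg a| <= 1.
Proof. by rewrite normr_sg; case: (a != 0). Qed.

Lemma norm1_comb (R : realType) n N (c : 'I_N -> R) (xs : 'I_N -> 'rV[R]_n) :
  (forall k, `|c k| <= 1) ->
  norm1 (\sum_k c k *: xs k) <= \sum_k norm1 (xs k).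
Proof.
move=> hc; rewrite /norm1 exchange_big /=; apply: ler_sum => i _.
rewrite summxE; apply: le_trans (ler_norm_sum _ _ _) _.
apply: ler_sum => k _; rewrite mxE normrM.
by rewrite -[X in _ <= X]mul1r ler_wpM2r.
Qed.

Lemma sumsq_le2 (R : realType) (I J : finType) (f : I -> J -> R) :
  (forall i j, 0 <= f i j) -> \sum_i \sum_j f i j ^+ 2 <= (\sum_i \sum_j f i j) ^+ 2.
Proof.
move=> hf; apply: le_trans (sumsq_le _); last by move=> i; rewrite sumr_ge0.
by apply: ler_sum => i _; apply: sumsq_le.
Qed.

Lemma sq_mono (R : realType) (a b : R) : 0 <= a -> a <= b -> a ^+ 2 <= b ^+ 2.
Proof. by move=> a0 ab; nra. Qed.

Lemma PD_inv_ge0 (R : realType) n (A : 'M[R]_n) (y : 'rV[R]_n) :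
  PD A -> 0 <= (y *m invmx A *m y^T) 0 0.
Proof.
move=> hA; have uA := PD_unit hA; have [sA pA] := hA.
set z := y *m invmx A.
have e2 : z *m A *m z^T = y *m invmx A *m y^T.
  rewrite /z -(mulmxA y (invmx A) A) mulVmx // mulmx1 trmx_mul trmx_inv sA.
  by rewrite mulmxA.
rewrite -e2; have [->|z0] := eqVneq z 0; last exact/ltW/pA.
by rewrite mul0mx mul0mx mxE.
Qed.

Unset Implicit Arguments. Set Strict Implicit.

Theorem proposition5 (R : realType) (d K L M N : nat)
  (w : 'I_K -> 'I_L -> 'I_M -> 'rV[R]_d)
  (x : 'I_K -> 'I_L -> 'I_N -> 'rV[R]_d)
  (beta Gw Gx : R) (hGw : 0 < Gw) (hGx : 0 < Gx)
  (hbeta : forall k : 'I_K,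
     \sum_(j < K | (j <= k)%N)
        (\sum_(l < L) \sum_(m < M) \sum_(n < N) `|dotv (w k l m) (x j l n)|) ^+ 2
     <= beta)
  (hw : forall k : 'I_K, \sum_(l < L) \sum_(m < M) norm1 (w k l m) <= Gw)
  (hx : forall k : 'I_K, \sum_(l < L) \sum_(n < N) norm1 (x k l n) <= Gx)
  (lambda : R) (hlambda : 0 < lambda) :
  \sum_(k < K) \sum_(l < L) \sum_(m < M) \sum_(n < N) `|dotv (w k l m) (x k l n)|
  <= Num.sqrt ((lambda + beta) * (d * L * M * K)%:R *
       ln (1 + (M%:R * Gw ^+ 2 * Gx ^+ 2 * K%:R) / (d%:R * L%:R * lambda))).
Proof.
case: (posnP d) => [d0|dpos].
  apply: le_trans (sqrtr_ge0 _); subst d.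
  rewrite big1 // => k _; rewrite big1 // => l _; rewrite big1 // => m _.
  by rewrite big1 // => n _; rewrite /dotv big_ord0 normr0.
case: (posnP L) => [L0|Lpos].
  apply: le_trans (sqrtr_ge0 _); subst L.
  by rewrite big1 // => k _; rewrite big_ord0.
case: (posnP M) => [M0|Mpos].
  apply: le_trans (sqrtr_ge0 _); subst M.
  by rewrite big1 // => k _; rewrite big1 // => l _; rewrite big_ord0.
destruct K as [|K'].
  by apply: le_trans (sqrtr_ge0 _); rewrite big_ord0.
set K := K'.+1 in w x hbeta hw hx *.
have beta0 : 0 <= beta.
  apply: le_trans (hbeta ord0); apply: sumr_ge0 => j _; exact: sqr_ge0.
have Gw2 : 0 < Gw ^+ 2 by rewrite exprn_gt0.
pose lam' := lambda / Gw ^+ 2.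
have lam0 : 0 < lam' by rewrite divr_gt0.
pose ix (j : nat) : 'I_K := inord j.
have ixE : forall j : 'I_K, ix j = j by move=> j; rewrite /ix inord_val.
pose yv l m (j : nat) : 'rV[R]_d :=
  \sum_(n < N) Num.sg (dotv (w (ix j) l m) (x (ix j) l n)) *: x (ix j) l n.
pose V l m (t : nat) := Vm lam' (yv l m) t.
pose q (k : 'I_K) l m := (yv l m k *m invmx (V l m k.+1) *m (yv l m k)^T) 0 0.
pose B (k : 'I_K) l m := (w k l m *m V l m k.+1 *m (w k l m)^T) 0 0.
pose T l := \sum_(k < K) (\sum_(n < N) norm1 (x k l n)) ^+ 2.
have B0 : forall k l m, 0 <= B k l m.
  move=> k l m; rewrite /B /V Vm_quad.
  apply: addr_ge0; first (apply: mulr_ge0; first exact: (ltW lam0)).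
    by apply: sumr_ge0 => i _; exact: sqr_ge0.
  by apply: sumr_ge0 => i _; exact: sqr_ge0.
have q0 : forall k l m, 0 <= q k l m.
  by move=> k l m; apply: PD_inv_ge0; apply: Vm_PD.
have C1 : forall k l m,
    \sum_n `|dotv (w k l m) (x k l n)| <= Num.sqrt (B k l m) * Num.sqrt (q k l m).
  move=> k l m.
  have e : \sum_n `|dotv (w k l m) (x k l n)| = (w k l m *m (yv l m k)^T) 0 0.
    by rewrite /yv dot_comb ixE; apply: eq_bigr => n _; rewrite normrEsg.
  rewrite -sqrtrM ?B0 //; apply: le_sqrt_sq; first by rewrite sumr_ge0.
  rewrite e; exact: (PD_cs_inv _ _ (Vm_PD (yv l m) k.+1 lam0)).
have C2 : forall k, \sum_l \sum_m B k l m <= lambda + beta.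
  move=> k.
  pose P (j : nat) l m := \sum_n `|dotv (w k l m) (x (ix j) l n)|.
  have hB : forall l m, B k l m <=
      lam' * norm1 (w k l m) ^+ 2 + \sum_(j < k.+1) P j l m ^+ 2.
    move=> l m; rewrite /B /V Vm_quad; apply: lerD.
      by rewrite ler_pM2l //; exact: sq_le_norm1.
    apply: ler_sum => j _; rewrite /yv dot_comb -real_normK ?num_real //.
    apply: sq_mono => //; apply: le_trans (ler_norm_sum _ _ _) _.
    apply: ler_sum => n _; rewrite normrM.
    by rewrite -[X in _ <= X]mul1r ler_wpM2r // norm_sg_le1.
  have h1 : \sum_l \sum_m B k l m <= \sum_l \sum_m
      (lam' * norm1 (w k l m) ^+ 2 + \sum_(j < k.+1) P j l m ^+ 2).
    by apply: ler_sum => l _; apply: ler_sum => m _; exact: hB.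
  apply: (le_trans h1).
  rewrite (eq_bigr (fun l => \sum_m lam' * norm1 (w k l m) ^+ 2 +
     \sum_m \sum_(j < k.+1) P j l m ^+ 2)); last by move=> l _; rewrite big_split.
  rewrite big_split /=; apply: lerD.
    rewrite -(divfK (lt0r_neq0 Gw2) lambda) -/lam'.
    rewrite (eq_bigr (fun l => lam' * \sum_m norm1 (w k l m) ^+ 2)); last first.
      by move=> l _; rewrite mulr_sumr.
    rewrite -mulr_sumr ler_pM2l //.
    apply: le_trans (sumsq_le2 _) _; first by move=> l m; exact: norm1_ge0.
    apply: sq_mono; last exact: hw.
    by apply: sumr_ge0 => l _; apply: sumr_ge0 => m _; exact: norm1_ge0.
  rewrite (eq_bigr (fun l => \sum_(j < k.+1) \sum_m P j l m ^+ 2)); last first.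
    by move=> l _; rewrite exchange_big.
  rewrite exchange_big /=.
  have h2 : \sum_(j < k.+1) \sum_l \sum_m P j l m ^+ 2 <=
      \sum_(j < k.+1) (\sum_l \sum_m P j l m) ^+ 2.
    apply: ler_sum => j _; apply: sumsq_le2 => l m.
    by apply: sumr_ge0 => n _.
  apply: (le_trans h2); apply: le_trans (hbeta k).
  rewrite (big_ord_widen _ (fun j : nat => (\sum_l \sum_m P j l m) ^+ 2) (ltn_ord k)).
  rewrite le_eqVlt; apply/orP; left; apply/eqP; apply: eq_bigr => j _.
  by rewrite /P ixE.
have C3 : forall l m, \sum_k q k l m <= d%:R * ln (1 + T l / (d%:R * lam')).
  move=> l m; apply: le_trans (pot_bound (yv l m) K lam0 dpos) _.
  have dl : 0 < d%:R * lam' by rewrite mulr_gt0 // ltr0n.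
  have hT : \sum_(j < K) \sum_i (yv l m j 0 i) ^+ 2 <= T l.
    apply: ler_sum => j _; apply: le_trans (sq_le_norm1 _) _.
    apply: sq_mono; first exact: norm1_ge0.
    rewrite /yv ixE; apply: norm1_comb => n; exact: norm_sg_le1.
  have S0 : 0 <= \sum_(j < K) \sum_i (yv l m j 0 i) ^+ 2.
    by apply: sumr_ge0 => j _; apply: sumr_ge0 => i _; exact: sqr_ge0.
  rewrite ler_pM2l ?ltr0n // ler_ln ?posrE.
  - by rewrite lerD2l ler_pM2r // invr_gt0.
  - by rewrite ltr_pwDl // divr_ge0 // ltW.
  - by rewrite ltr_pwDl // divr_ge0 // ?(ltW dl) //; exact: (le_trans S0 hT).
have C4 : \sum_l T l <= K%:R * Gx ^+ 2.
  rewrite /T exchange_big /=.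
  have -> : K%:R * Gx ^+ 2 = \sum_(k < K) Gx ^+ 2 by rewrite sumr_const card_ord mulr_natl.
  apply: ler_sum => k _.
  have n0 : forall l, 0 <= \sum_n norm1 (x k l n).
    by move=> l; apply: sumr_ge0 => n _; exact: norm1_ge0.
  apply: le_trans (sumsq_le n0) _.
  by apply: sq_mono (hx k); apply: sumr_ge0 => l _.
have H1 : \sum_k \sum_l \sum_m \sum_n `|dotv (w k l m) (x k l n)| <=
    Num.sqrt (\sum_k \sum_l \sum_m B k l m) * Num.sqrt (\sum_k \sum_l \sum_m q k l m).
  apply: sum_cs => [k|k|k].
  - apply: sum_cs => [l|l|l].
    + by apply: sum_cs => [m|m|m]; [exact: C1 | exact: B0 | exact: q0].
    + by apply: sumr_ge0 => m _; exact: B0.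
    + by apply: sumr_ge0 => m _; exact: q0.
  - by apply: sumr_ge0 => l _; apply: sumr_ge0 => m _; exact: B0.
  - by apply: sumr_ge0 => l _; apply: sumr_ge0 => m _; exact: q0.
have HB : \sum_k \sum_l \sum_m B k l m <= K%:R * (lambda + beta).
  have -> : K%:R * (lambda + beta) = \sum_(k < K) (lambda + beta).
    by rewrite sumr_const card_ord mulr_natl.
  by apply: ler_sum => k _; exact: C2.
set Z := M%:R * Gw ^+ 2 * Gx ^+ 2 * K%:R / (d%:R * L%:R * lambda).
have dR : 0 < d%:R :> R by rewrite ltr0n.
have LR : 0 < L%:R :> R by rewrite ltr0n.
have MR : 1 <= M%:R :> R by rewrite ler1n.
have KR : 0 < K%:R :> R by rewrite ltr0n.
have Z0 : 0 <= Z.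
  by rewrite /Z divr_ge0 ?mulr_ge0 ?ltW ?exprn_gt0 // ltr0n.
have HQ : \sum_k \sum_l \sum_m q k l m <= (M * d * L)%:R * ln (1 + Z).
  rewrite exchange_big /=.
  rewrite (eq_bigr (fun l => \sum_m \sum_k q k l m)); last first.
    by move=> l _; rewrite exchange_big.
  have h1 : \sum_l \sum_m \sum_k q k l m <=
      \sum_l \sum_(m < M) (d%:R * ln (1 + T l / (d%:R * lam'))).
    by apply: ler_sum => l _; apply: ler_sum => m _; exact: C3.
  apply: (le_trans h1).
  rewrite (eq_bigr (fun l => M%:R * (d%:R * ln (1 + T l / (d%:R * lam'))))); last first.
    by move=> l _; rewrite sumr_const card_ord (mulr_natl _ M).
  rewrite -mulr_sumr -mulr_sumr natrM natrM -!mulrA ler_pM2l ?ltr0n //.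
  rewrite ler_pM2l ?ltr0n //.
  have T0 : forall l, 0 <= T l / (d%:R * lam').
    move=> l; apply: divr_ge0; last exact: (ltW (mulr_gt0 dR lam0)).
    by apply: sumr_ge0 => k _; exact: sqr_ge0.
  apply: le_trans (jensen_ln Lpos T0) _.
  rewrite ler_pM2l // ler_ln ?posrE; first last.
  - by rewrite ltr_pwDl.
  - by rewrite ltr_pwDl // divr_ge0 ?sumr_ge0 // ltW.
  rewrite lerD2l -mulr_suml.
  apply: (@le_trans _ _ (K%:R * Gx ^+ 2 / (d%:R * lam') / L%:R)).
    by rewrite ler_pM2r ?invr_gt0 // ler_pM2r // invr_gt0 mulr_gt0.
  have -> : Z = M%:R * (K%:R * Gx ^+ 2 / (d%:R * lam') / L%:R).
    rewrite /Z /lam'; field.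
    by rewrite !lt0r_neq0.
  rewrite ler_peMl //.
    apply: divr_ge0; last exact: (ltW LR).
  apply: divr_ge0; last exact: (ltW (mulr_gt0 dR lam0)).
  by rewrite mulr_ge0 ?sqr_ge0 // ltW.
have lnZ : 0 <= ln (1 + Z) by rewrite ln_ge0 // lerDl.
apply: (le_trans H1).
have eq : (lambda + beta) * (d * L * M * K)%:R * ln (1 + Z) =
    (K%:R * (lambda + beta)) * ((M * d * L)%:R * ln (1 + Z)).
  by rewrite !natrM; ring.
rewrite eq sqrtrM; last by apply: mulr_ge0; [exact: ler0n | exact: addr_ge0 (ltW hlambda) beta0].
apply: ler_pM; rewrite ?sqrtr_ge0 //; exact: ler_wsqrtr.
Qed.
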